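(* Let $n\ge 1$. If the Zeckendorf game on $n$, starting from $\{F_1^n\}$, can be played to the Zeckendorf decomposition of $n$ using only splitting moves and $C_1$ moves, then $n=F_k-1$ for some $k\ge 2$.
   Context: Fibonacci numbers are indexed by $F_1=1$, $F_2=2$, $F_{i+1}=F_i+F_{i-1}$. A game state is a finite multiset of Fibonacci numbers (tracked by index); $\{F_1^n\}$ denotes $n$ copies of $F_1$. The legal moves are: $C_1$: replace $F_1,F_1$ by $F_2$; for $i\ge 2$, $C_i$: replace $F_{i-1},F_i$ by $F_{i+1}$ (a ''combining move''); $S_2$: replace $F_2,F_2$ by $F_1,F_3$; for $i\ge 3$, $S_i$: replace $F_i,F_i$ by $F_{i-2},F_{i+1}$ (a ''splitting move''). The game on $n$ starts at $\{F_1^n\}$ and ends when no legal move is available, which happens exactly at the Zeckendorf decomposition of $n$ (the unique representation of $n$ as a sum of $F_i$'s with distinct, pairwise non-consecutive indices). *)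

(* Defs.v *)
From mathcomp Require Import all_boot.
Set Implicit Arguments. Unset Strict Implicit. Unset Printing Implicit Defensive.

(* Fibonacci numbers with the paper's indexing: F 1 = 1, F 2 = 2,
   F (i+1) = F i + F (i-1).  (F 0 = 1 is an unused auxiliary value.) *)
Fixpoint fib (i : nat) : nat :=
  match i with
  | 0 => 1
  | 1 => 1
  | j.+1 => (match j with 0 => 1 | k.+1 => fib j + fib k end)
  end.

(* A game state: a multiset of Fibonacci numbers tracked by index,
   given as the multiplicity function  index -> count  (index 0 unused). *)
Definition state := nat -> nat.

Definition replaces (rem : seq nat) (add : seq nat) (s s' : state) : Prop :=
  (forall j, count_mem j rem <= s j) /\
  (forall j, s' j = s j - count_mem j rem + count_mem j add).

Definition move_C (i : nat) (s s' : state) : Prop :=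
  if i == 1 then replaces [:: 1; 1] [:: 2] s s'
  else (2 <= i) /\ replaces [:: i.-1; i] [:: i.+1] s s'.

Definition move_S (i : nat) (s s' : state) : Prop :=
  if i == 2 then replaces [:: 2; 2] [:: 1; 3] s s'
  else (3 <= i) /\ replaces [:: i; i] [:: i - 2; i.+1] s s'.

Definition split_or_C1_move (s s' : state) : Prop :=
  move_C 1 s s' \/ exists i, move_S i s s'.

Inductive reaches (R : state -> state -> Prop) : state -> state -> Prop :=
  | reaches_refl s : reaches R s s
  | reaches_step s t u : R s t -> reaches R t u -> reaches R s u.

Definition init_state (n : nat) : state := fun j => if j == 1 then n else 0.

Definition zeckendorf_state (n : nat) (z : state) : Prop :=
  exists I : seq nat,
    [/\ uniq I, all (fun i => 1 <= i) I,
        (forall i j, i \in I -> j \in I -> i != j.+1),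
        \sum_(i <- I) fib i = n
      & forall j, z j = (j \in I)].

Example fib_test : [seq fib i | i <- iota 1 7] = [:: 1; 2; 3; 5; 8; 13; 21].
Proof. by []. Qed.

(* Main.v *)
Require Import Defs.
From mathcomp Require Import all_boot.
From mathcomp Require Import zify.

Definition V (s : state) (j : nat) := \sum_(1 <= x < j.+1) s x * fib x.

Lemma fibS i : fib i.+2 = fib i.+1 + fib i.
Proof. by []. Qed.

Lemma V0 s : V s 0 = 0.
Proof. by rewrite /V big_geq. Qed.

Lemma VS s j : V s j.+1 = V s j + s j.+1 * fib j.+1.
Proof. by rewrite /V big_nat_recr. Qed.

Lemma sum_ind a j : \sum_(1 <= x < j.+1) (a == x) * fib x = (0 < a <= j) * fib a.
Proof.
elim: j => [|j IH]; first by rewrite big_geq //; lia.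
rewrite big_nat_recr // IH.
case: (eqVneq a j.+1) => [->|ne]; first by rewrite ltnn andbF leqnn andbT ltn0Sn; change (0 * fib j.+1 + 1 * fib j.+1 = 1 * fib j.+1); lia.
have -> : (0 < a <= j.+1) = (0 < a <= j) by lia.
rewrite [false * _]/=; rewrite -[RHS]addn0; congr (_ + _).
Qed.

Lemma sum_count l j :
  \sum_(1 <= x < j.+1) count_mem x l * fib x = \sum_(a <- l) (0 < a <= j) * fib a.
Proof.
elim: l => [|a l IH]; first by rewrite big_nil; apply: big1 => x _.
rewrite big_cons -IH -sum_ind -big_split /=; apply: eq_bigr => x _; lia.
Qed.

Lemma rel rem add s s' j : replaces rem add s s' ->
  V s' j + \sum_(a <- rem) (0 < a <= j) * fib a =
  V s j + \sum_(a <- add) (0 < a <= j) * fib a.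
Proof.
move=> [H1 H2]; rewrite -!sum_count /V -!big_split /=.
apply: eq_bigr => x _; rewrite -!mulnDl H2; congr (_ * _); by rewrite -addnA (addnC (count_mem x add)) addnA subnK.
Qed.

Lemma V_ge s j x : 1 <= x <= j -> s x * fib x <= V s j.
Proof.
elim: j => [|j IH]; first lia.
move=> h; rewrite VS; case: (eqVneq x j.+1) => [->|ne]; first lia.
have : 1 <= x <= j by lia.
move/IH; lia.
Qed.

Definition Inv (s : state) := forall j k, j < k -> 0 < s k -> fib j <= V s j + 1.


Lemma inv_step s s' : Inv s -> split_or_C1_move s s' -> Inv s'.
Proof.
move=> Hs [HC|[i HS]] j k ljk sk.
- case: j ljk => [|[|j]] ljk; [by rewrite [fib _]/=; lia|by rewrite [fib _]/=; lia|].
  rewrite /move_C /= in HC.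
  have R := rel _ _ _ _ (j.+2) HC; rewrite !big_cons !big_nil in R.
    have f1 : fib 1 = 1 by []. have f2 : fib 2 = 2 by []. have f3 : fib 3 = 3 by [].
  have E := HC.2 k; rewrite /= in E.
  have Hk : 0 < s k by lia.
  have := Hs _ _ ljk Hk; lia.
- case: j ljk => [|[|j]] ljk; [by rewrite [fib _]/=; lia|by rewrite [fib _]/=; lia|].
  rewrite /move_S in HS; case: (eqVneq i 2) HS => [Ei|ne] HS; [subst i|]; rewrite /= ?(negbTE ne) in HS.
  + have R := rel _ _ _ _ (j.+2) HS; rewrite !big_cons !big_nil in R.
    have f1 : fib 1 = 1 by []. have f2 : fib 2 = 2 by []. have f3 : fib 3 = 3 by [].
    have E := HS.2 k; rewrite /= in E.
    have E1 := HS.2 1; rewrite /= in E1.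
    have := V_ge s' (j.+2) 1.
    case: j ljk R E => [|j] ljk R E.
    * by change (fib 0) with 1; lia.
    * have Hk : 0 < s k by lia.
      have := Hs _ _ ljk Hk; lia.
  + case: HS => i3 HS.
    have R := rel _ _ _ _ (j.+2) HS; rewrite !big_cons !big_nil in R.
    have f1 : fib 1 = 1 by []. have f2 : fib 2 = 2 by []. have f3 : fib 3 = 3 by [].
    have E := HS.2 k; rewrite /= in E.
    have Ei := HS.2 i; rewrite /= in Ei.
    have Hc := (HS.1 i); rewrite /= in Hc.
    clear HS; case: i i3 ne R E Ei Hc => [|[|[|i]]] // _ _ R E Ei Hc.
    have F1 := fibS i; have F2 := fibS i.+1; have F3 := fibS i.+2.
    have Hi : 0 < s i.+3 by lia.
    rewrite !subSS subn0 in R E Ei.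
    case: (ltngtP j.+2 i.+3) => hj.
    * have := Hs _ _ hj Hi; lia.
    * have Hk : 0 < s k by lia.
      have := Hs _ _ ljk Hk; lia.
    * move: hj R => [->] R.
      have := Hs (i.+2) (i.+3) (ltnSn _) Hi.
      rewrite [V s _]VS in R.
      have [u Hu] : exists u, s i.+3 = u + 2 by exists (s i.+3 - 2); lia.
      rewrite Hu mulnDl in R; lia.
Qed.

Lemma inv_reach s t : reaches split_or_C1_move s t -> Inv s -> Inv t.
Proof. elim=> // a b c H _ IH Ha; apply: IH; exact: inv_step Ha H. Qed.

Lemma inv_init n : Inv (init_state n).
Proof.
move=> j k ljk; rewrite /init_state; case: eqP => // Ek _; subst k.
by case: j ljk => // _; rewrite V0.
Qed.

Lemma zbound (z : state) :
  (forall x, z x <= 1) -> (forall x, 0 < x -> z x = 0 \/ z x.+1 = 0) ->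
  forall j, V z j < fib j.+1.
Proof.
move=> H1 H2.
have H : forall j, V z j < fib j.+1 /\ V z j.+1 < fib j.+2.
  elim=> [|j [IH1 IH2]].
    rewrite VS V0; have := H1 1; change (fib 1) with 1; change (fib 2) with 2; lia.
  split => //; rewrite VS; have F := fibS j.+1.
  have hb : z j.+2 * fib j.+2 <= fib j.+2.
    by rewrite -{2}(mul1n (fib _)) leq_mul2r H1 orbT.
  case: (H2 j.+1 (ltn0Sn _)) => h.
  - rewrite VS h; lia.
  - rewrite h; lia.
by move=> j; case: (H j).
Qed.

Lemma sum_seq_V (I : seq nat) (z : state) M :
  uniq I -> all (fun i => 1 <= i) I -> (forall i, i \in I -> i <= M) ->
  (forall j, z j = (j \in I)) ->
  \sum_(i <- I) fib i = V z M.
Proof.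
move=> uI aI bI zI.
have P : perm_eq I [seq x <- index_iota 1 M.+1 | x \in I].
  apply: uniq_perm => //; first by apply: filter_uniq; apply: iota_uniq.
  move=> x; rewrite mem_filter mem_index_iota.
  case xI: (x \in I) => //=.
  have := bI x xI; move/allP: aI => /(_ x xI); lia.
rewrite (perm_big _ P) big_filter big_mkcond /V.
by apply: eq_bigr => x _; rewrite zI; case: (x \in I) => //=; rewrite mul1n.
Qed.

Lemma max_in (r : seq nat) : r != [::] -> \max_(i <- r) i \in r.
Proof.
elim: r => // a r IH _; rewrite big_cons; case: r IH => [|b r] IH.
  by rewrite big_nil maxn0 mem_seq1.
change (maxn a (\max_(i <- b :: r) i) \in a :: b :: r).
have := IH isT; case: (leqP a (\max_(i <- b :: r) i)) => h.
  by move=> H; rewrite in_cons H orbT.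
by move=> _; rewrite in_cons eqxx.
Qed.

Theorem lemma3p2 (n : nat) :
  1 <= n ->
  (exists z, zeckendorf_state n z /\ reaches split_or_C1_move (init_state n) z) ->
  exists k, 2 <= k /\ n = fib k - 1.
Proof.
move=> n1 [z [[I [uI aI nc sI zI]] Hr]].
have Iz := inv_reach _ _ Hr (inv_init n).
set M := \max_(i <- I) i.
have bI : forall i, i \in I -> i <= M.
  by move=> i iI; rewrite /M (big_rem _ iI) /=; apply: leq_maxl.
have nV := sum_seq_V _ _ _ uI aI bI zI; rewrite sI in nV.
have MI : M \in I.
  apply: max_in; case: I {uI aI nc zI Iz M bI nV} sI => // ; rewrite big_nil => h.
  by rewrite -h in n1.
have M1 : 1 <= M by move/allP: aI => /(_ M MI).
have zM : z M = 1 by rewrite zI MI.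
have zb := zbound z.

clearbody M; case: M bI M1 zM nV MI => [|[|m]] // bI _ zM nV MI.
  exists 2; split => //; rewrite nV VS V0 zM; by [].
have zm : z m.+1 = 0.
  rewrite zI; case mI: (m.+1 \in I) => //.
  by have := nc _ _ MI mI; rewrite eqxx.
have B : V z m < fib m.+1.
  apply: zb => [x|x x0]; first by rewrite zI; case: (x \in I).
  rewrite !zI; case xI: (x \in I); last by left.
  case xI': (x.+1 \in I); last by right.
  by have := nc _ _ xI' xI; rewrite eqxx.
have Iv := Iz (m.+1) (m.+2) (ltnSn _) ltac:(by rewrite zM).
rewrite VS zm in Iv; rewrite VS VS zm zM in nV.
exists m.+3; split => //; have := fibS m.+1; lia.
Qed.
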